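(* Let $M_\varphi$ be a hyperbolic once-punctured torus bundle with $H_1(M_\varphi;\mathbb{Z}_2)\cong\mathbb{Z}_2^3$. Then $X_\varphi(S)$ contains either exactly one or all three of the coordinate axes $L_1,L_2,L_3$ of $X(S)=\mathbb{C}^3$. Moreover, $X_{\varphi^2}(S)$ contains all three lines $L_1,L_2,L_3$.
   Context: $S$ is the once-punctured torus fibre with $\pi_1(S)$ free on $a,b$; $X(S)\cong\mathbb{C}^3$ is its $\mathrm{SL}(2,\mathbb{C})$-character variety with coordinates $(x,y,z)=(\operatorname{tr}\rho(a),\operatorname{tr}\rho(b),\operatorname{tr}\rho(ab))$; $L_1,L_2,L_3$ are the $x$-, $y$- and $z$-axes. For a monodromy $\psi$, $X_\psi(S)$ is the fixed set of the polynomial automorphism of $X(S)$ induced by $\psi$ ($\chi\mapsto\chi\circ\psi$). *)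

(* Defs.v *)
From HB Require Import structures.
From mathcomp Require Import all_boot all_order all_algebra.
From mathcomp Require Import complex.
From mathcomp Require Import Rstruct.
From Stdlib Require Import Rdefinitions.
Set Implicit Arguments.
Unset Strict Implicit.
Unset Printing Implicit Defensive.
Import Order.TTheory GRing.Theory Num.Theory.
Local Open Scope ring_scope.

Definition CC : Type := (Rdefinitions.R)[i].

(* A letter is (g, e): g = false for a, g = true for b; e = true means the
   inverse letter. A word is a sequence of letters. *)
Definition letter := (bool * bool)%type.
Definition word := seq letter.
Definition ga : word := [:: (false, false)].
Definition gb : word := [:: (true, false)].
Definition linv (l : letter) : letter := (l.1, ~~ l.2).
Definition winv (w : word) : word := rev (map linv w).
Definition wreduce (w : word) : word :=
  foldr (fun l acc => match acc with
                      | l' :: t => if l' == linv l then t else l :: acc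
                      | [::] => [:: l] end) [::] w.

Record endo := Endo { img_a : word; img_b : word }.
Definition wsubst (f : endo) (w : word) : word :=
  flatten (map (fun l => let u := if l.1 then img_b f else img_a f in
                         if l.2 then winv u else u) w).
Definition ecomp (f g : endo) : endo :=
  Endo (wsubst f (img_a g)) (wsubst f (img_b g)).
Definition eeq (f g : endo) : Prop :=
  wreduce (img_a f) = wreduce (img_a g) /\ wreduce (img_b f) = wreduce (img_b g).
Definition eid : endo := Endo ga gb.
Definition is_aut (f : endo) : Prop :=
  exists g : endo, eeq (ecomp f g) eid /\ eeq (ecomp g f) eid.

Definition expsum (g : bool) (w : word) : int :=
  \sum_(l <- w | l.1 == g) (if l.2 then (-1) else 1).
(* matrix of psi_* on H_1(S;Z) = Z^2 (columns = images of a, b) *)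
Definition abel (f : endo) : 'M[int]_2 :=
  \matrix_(i < 2, j < 2)
     expsum (i == 1 :> nat) (if j == 0 :> nat then img_a f else img_b f).

(* Hyperbolicity of M_psi (orientable bundle, psi orientation preserving):
   by Thurston, M_psi is hyperbolic iff psi is pseudo-Anosov iff
   |tr psi_*| > 2 (with det psi_* = 1). *)
Definition hyperbolic_bundle (f : endo) : Prop :=
  \det (abel f) = 1 /\ 2 < `|\tr (abel f)|.

(* dim_{F_2} H_1(M_psi; Z_2): by the Wang sequence,
   H_1(M_psi; Z_2) = Z_2 (+) coker(psi_* - 1 : Z_2^2 -> Z_2^2). *)
Definition H1_Z2_dim (f : endo) : nat :=
  1 + (2 - \rank (map_mx (fun z : int => (z%:~R : 'F_2)) (abel f - 1%:M))).

Definition pt := (CC * CC * CC)%type.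
Definition lmat (A B : 'M[CC]_2) (l : letter) : 'M[CC]_2 :=
  let M := if l.1 then B else A in if l.2 then invmx M else M.
Definition weval (A B : 'M[CC]_2) (w : word) : 'M[CC]_2 :=
  foldr (fun l M => lmat A B l *m M) 1%:M w.
Definition charpt (A B : 'M[CC]_2) : pt := (\tr A, \tr B, \tr (A *m B)).

(* X_psi(S): fixed set of chi |-> chi o psi.  The coordinates of chi o psi
   are (tr rho(psi a), tr rho(psi b), tr rho(psi(ab))), for any
   rho : F(a,b) -> SL(2,C) with character chi. *)
Definition Xfix (f : endo) : pt -> Prop := fun p =>
  forall A B : 'M[CC]_2, \det A = 1 -> \det B = 1 -> charpt A B = p ->
    charpt (weval A B (img_a f)) (weval A B (img_b f)) = p.

Definition L1 : pt -> Prop := fun p => p.1.2 = 0 /\ p.2 = 0.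
Definition L2 : pt -> Prop := fun p => p.1.1 = 0 /\ p.2 = 0.
Definition L3 : pt -> Prop := fun p => p.1.1 = 0 /\ p.1.2 = 0.
Definition subset_pt (P Q : pt -> Prop) : Prop := forall p, P p -> Q p.

(* Main.v *)
Require Import Defs.
From mathcomp Require Import all_boot all_order all_algebra.
From mathcomp Require Import complex Rstruct ring lra zify.
Import Order.TTheory GRing.Theory Num.Theory.
Local Open Scope ring_scope.

Lemma det2 (R : comRingType) (M : 'M[R]_2) : \det M = M 0 0 * M 1 1 - M 0 1 * M 1 0.
Proof.
rewrite (expand_det_row _ 0) !big_ord_recl big_ord0 /cofactor !det_mx11 !mxE /=.
rewrite !expr0 !expr1 !mul1r mulN1r addr0 mulrN.
by congr (M _ _ * M _ _ - M _ _ * M _ _); apply/val_inj.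
Qed.

Lemma tr2 (R : comRingType) (M : 'M[R]_2) : \tr M = M 0 0 + M 1 1.
Proof. by rewrite /mxtrace !big_ord_recl big_ord0 addr0; congr (M _ _ + M _ _); apply/val_inj. Qed.

Lemma mul2E (R : comRingType) (M N : 'M[R]_2) i j : (M * N) i j = M i 0 * N 0 j + M i 1 * N 1 j.
Proof. by rewrite -mulmxE mxE !big_ord_recl big_ord0 addr0; congr (M _ _ * N _ _ + M _ _ * N _ _); apply/val_inj. Qed.

Lemma ord2P (i : 'I_2) : i = 0 \/ i = 1.
Proof. case: i => [[|[|k]] Hk]; [left|right|]; try apply/val_inj => //. by []. Qed.

Lemma CH2 (R : comRingType) (M : 'M[R]_2) : M * M = \tr M *: M - (\det M)%:M.
Proof.
apply/matrixP => i j; rewrite mul2E !mxE det2 tr2.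
case: (ord2P i) => ->; case: (ord2P j) => -> /=; ring.
Qed.
Notation MM := 'M[CC]_2.

Lemma unit_det1 (M : MM) : \det M = 1 -> M \is a GRing.unit.
Proof. by move=> d; change (M \in unitmx); rewrite unitmxE d unitr1. Qed.

Lemma sq_neg1 (M : MM) : \det M = 1 -> \tr M = 0 -> M * M = -1.
Proof. by move=> d t; rewrite CH2 d t scale0r sub0r. Qed.

Lemma inv_det1 (M : MM) : \det M = 1 -> M^-1 = \tr M *: 1 - M.
Proof.
move=> d; have uM := unit_det1 M d.
have h := CH2 _ M; rewrite d in h.
have h2 : M^-1 * (M * M) = M^-1 * (\tr M *: M - 1%:M) by rewrite h.
rewrite mulKr // mulrBr -scalerAr mulVr // mulr1 in h2.
move: h2; set t := \tr M => h2; by rewrite {2}h2 opprB addrC subrK.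
Qed.

Lemma tr_inv (M : MM) : \det M = 1 -> \tr (M^-1) = \tr M.
Proof.
move=> d; rewrite inv_det1 // linearB /= linearZ /= mxtrace1.
by rewrite (_ : (2%:R : CC) = 1 + 1) // mulrDr mulr1 addrK.
Qed.

Lemma tr_sq (M : MM) : \det M = 1 -> M * M = -1 -> \tr M = 0.
Proof.
move=> d h; have := CH2 _ M; rewrite h d => /eqP; rewrite eq_sym subr_eq addrC subrr eq_sym => /eqP h2.
have := f_equal determinant h2; rewrite detZ d det0 mulr1 => /eqP.
by rewrite eq_sym expf_eq0 /= => /eqP.
Qed.

Lemma det_mul (M N : MM) : \det (M * N) = \det M * \det N.
Proof. by rewrite -mulmxE det_mulmx. Qed.

Lemma det_expz (P : MM) (n : int) : \det P = 1 -> \det (P ^ n) = 1.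
Proof.
move=> d; have hn : forall k, \det (P ^+ k) = 1.
  by elim=> [|k IH]; rewrite ?expr0 ?det1 // exprS det_mul IH d mulr1.
case: n => k; first exact: hn.
by change (\det (invmx (P ^+ k.+1)) = 1); rewrite det_inv hn invr1.
Qed.

Lemma rel (P Q : MM) : \det P = 1 -> \det Q = 1 -> \tr Q = 0 -> \tr (P * Q) = 0 ->
  Q * Q = -1 /\ Q * P = P^-1 * Q.
Proof.
move=> dP dQ tQ tPQ; have QQ := sq_neg1 Q dQ tQ.
have dPQ : \det (P * Q) = 1 by rewrite det_mul dP dQ mulr1.
have PQ2 := sq_neg1 (P * Q) dPQ tPQ.
have uP := unit_det1 P dP.
have e1 : Q * P * Q = - P^-1.
  apply: (mulrI uP); rewrite mulrN mulrV // !mulrA; by rewrite -PQ2 !mulrA.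
split => //.
by rewrite -[Q * P]opprK -mulrN1 -QQ !mulrA mulNr e1 opprK.
Qed.

Definition H := (int * nat)%type.
Definition hmul (x y : H) : H := (x.1 + (if odd x.2 then - y.1 else y.1), (x.2 + y.2)%N).
Definition hinv (x : H) : H := (if odd x.2 then x.1 else - x.1, (3 * x.2)%N).
Definition himg (ha hb : H) (l : letter) : H :=
  let h := if l.1 then hb else ha in if l.2 then hinv h else h.
Definition st (ha hb : H) (w : word) : H :=
  foldr (fun l s => hmul (himg ha hb l) s) (0, 0%N) w.
Definition Mx (P Q : MM) (x : H) : MM := P ^ x.1 * Q ^+ x.2.

Lemma hmul_inv x : hmul x (hinv x) = (0, (4 * x.2)%N).
Proof. case: x => n e; rewrite /hmul /hinv /=; case: (odd e); congr pair; lia. Qed.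

Lemma hmul_invl x : hmul (hinv x) x = (0, (4 * x.2)%N).
Proof. case: x => n e; rewrite /hmul /hinv /= oddM /=; case: (odd e); congr pair; lia. Qed.

Section MxSec.
Variables (P Q : MM).
Hypotheses (uP : P \is a GRing.unit) (QQ : Q * Q = -1) (QP : Q * P = P^-1 * Q).

Lemma QV : Q * P^-1 = P * Q.
Proof.
by rewrite -[P * Q](mulrK uP) -(mulrA P Q P) QP mulrA mulrV // mul1r.
Qed.

Lemma QPn_nat k : Q * P ^+ k = (P^-1) ^+ k * Q.
Proof.
elim: k => [|k IH]; first by rewrite !expr0 mulr1 mul1r.
by rewrite !exprS mulrA QP -(mulrA _ Q) IH mulrA.
Qed.

Lemma QPVn_nat k : Q * (P^-1) ^+ k = P ^+ k * Q.
Proof.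
elim: k => [|k IH]; first by rewrite !expr0 mulr1 mul1r.
by rewrite !exprS mulrA QV -(mulrA _ Q) IH mulrA.
Qed.

Lemma QPz (n : int) : Q * P ^ n = P ^ (- n) * Q.
Proof.
case: n => k.
  by rewrite -exprz_inv; exact: QPn_nat.
rewrite NegzE opprK.
change (Q * (P ^+ k.+1)^-1 = P ^+ k.+1 * Q).
by rewrite -exprVn QPVn_nat.
Qed.

Lemma QeP (e : nat) (n : int) : Q ^+ e * P ^ n = P ^ (if odd e then - n else n) * Q ^+ e.
Proof.
elim: e n => [|e IH] n; first by rewrite !expr0 mulr1 mul1r.
rewrite exprS -mulrA IH mulrA QPz -mulrA /=.
by case: (odd e) => //=; rewrite opprK.
Qed.

Lemma MxM x y : Mx P Q x * Mx P Q y = Mx P Q (hmul x y).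
Proof.
rewrite /Mx /hmul /= mulrA -[P ^ x.1 * Q ^+ x.2 * P ^ y.1]mulrA QeP.
by rewrite mulrA -exprzDr // -mulrA -exprD.
Qed.

Lemma Q4 : Q ^+ 4 = 1.
Proof. have h : Q ^+ 2 = -1 by rewrite expr2 QQ. by rewrite (exprM Q 2 2) h expr2 mulrN1 opprK. Qed.

Lemma Mx4 k : Mx P Q (0, (4 * k)%N) = 1.
Proof. by rewrite /Mx /= expr0z mul1r exprM Q4 expr1n. Qed.

Lemma Mx_V x : (Mx P Q x)^-1 = Mx P Q (hinv x).
Proof.
have h1 : Mx P Q x * Mx P Q (hinv x) = 1 by rewrite MxM hmul_inv Mx4.
have h2 : Mx P Q (hinv x) * Mx P Q x = 1 by rewrite MxM hmul_invl Mx4.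
have u : Mx P Q x \is a GRing.unit by apply/unitrP; exists (Mx P Q (hinv x)).
by rewrite -[_^-1]mulr1 -h1 mulKr.
Qed.

Lemma weval_st ha hb w : weval (Mx P Q ha) (Mx P Q hb) w = Mx P Q (st ha hb w).
Proof.
elim: w => [|[g e] w IH] /=.
  by rewrite /Mx /= expr0z expr0 mulr1.
rewrite IH /lmat /himg /=.
case: g; case: e => /=; try exact: MxM.
  by rewrite (_ : invmx _ = (Mx P Q hb)^-1) // Mx_V; apply: MxM.
by rewrite (_ : invmx _ = (Mx P Q ha)^-1) // Mx_V; apply: MxM.
Qed.

End MxSec.

Section TrSec.
Variables (P Q : MM).
Hypotheses (dP : \det P = 1) (dQ : \det Q = 1) (QQ : Q * Q = -1) (QP : Q * P = P^-1 * Q).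

Lemma Q2m m : Q ^+ (2 * m) = if odd m then -1 else 1.
Proof.
rewrite exprM (_ : Q ^+ 2 = -1) ?expr2 // -signr_odd.
by case: (odd m); rewrite ?expr1 ?expr0.
Qed.

Lemma det_Mx x : \det (Mx P Q x) = 1.
Proof. by rewrite /Mx det_mul det_expz // (det_expz Q (Posz x.2)) // mulr1. Qed.

Lemma half_eq e : ~~ odd e -> e = (2 * e./2)%N.
Proof. by move=> h; rewrite mul2n -{1}(odd_double_half e) (negbTE h). Qed.

Lemma tr_Mx x : \tr (Mx P Q x) =
  if odd x.2 then 0 else if odd (x.2./2) then - \tr (P ^ x.1) else \tr (P ^ x.1).
Proof.
have uP := unit_det1 P dP.
case: ifP => ho.
  apply: tr_sq; first exact: det_Mx.
  rewrite MxM // /hmul /= ho /Mx /= subrr expr0z mul1r addnn -mul2n Q2m.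
  by rewrite ho.
rewrite /Mx {1}(half_eq _ (negbT ho)) Q2m.
by case: (odd (x.2./2)); rewrite ?mulr1 // mulrN1 linearN.
Qed.

End TrSec.

Lemma tr_pm1 (P : MM) (n : int) : \det P = 1 -> (n = 1 \/ n = -1) -> \tr (P ^ n) = \tr P.
Proof. by move=> d [->|->]; rewrite ?expr1z // exprN1 tr_inv. Qed.

Section WordSec.
Variables (A B : MM).
Hypotheses (uA : A \is a GRing.unit) (uB : B \is a GRing.unit).

Lemma weval_cat w1 w2 : weval A B (w1 ++ w2) = weval A B w1 * weval A B w2.
Proof.
elim: w1 => [|l w1 IH] /=; first by rewrite mul1r.
by rewrite IH; exact: mulmxA.
Qed.

Lemma lmat_unit l : lmat A B l \is a GRing.unit.
Proof.
case: l => [[] []]; rewrite /lmat /=; rewrite ?unitrV //;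
 by rewrite (_ : invmx _ = _^-1) // unitrV.
Qed.

Lemma weval_unit w : weval A B w \is a GRing.unit.
Proof.
elim: w => [|l w IH] /=; first exact: unitr1.
change (mulmx (lmat A B l) (weval A B w) \in unitmx); rewrite unitmx_mul; apply/andP; split; [exact: lmat_unit | exact: IH].
Qed.

Lemma lmat_linv l : lmat A B (linv l) = (lmat A B l)^-1.
Proof.
case: l => [g []]; rewrite /lmat /linv /=.
  by symmetry; exact: invrK.
by [].
Qed.

Lemma weval_winv w : weval A B (winv w) = (weval A B w)^-1.
Proof.
elim: w => [|l w IH]; first by rewrite /= invr1.
rewrite /winv /= rev_cons -cats1 weval_cat -/(winv w) IH /= lmat_linv.
by rewrite -mulmxE mulmx1 mulmxE invrM // ?lmat_unit ?weval_unit.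
Qed.

Lemma weval_wsubst f w : weval A B (wsubst f w) =
  weval (weval A B (img_a f)) (weval A B (img_b f)) w.
Proof.
elim: w => [|[g e] w IH] //=.
rewrite weval_cat -/(wsubst f w) IH /lmat /=.
by case: g; case: e => //=; rewrite weval_winv.
Qed.

Lemma weval_reduce w : weval A B (wreduce w) = weval A B w.
Proof.
elim: w => [|l w IH] //.
have -> : wreduce (l :: w) = match wreduce w with
                      | l' :: t => if l' == linv l then t else l :: wreduce w
                      | [::] => [:: l] end.
  by rewrite /=; case: (wreduce w).
move: IH; case: (wreduce w) => [|l' t] IH /=; first by rewrite -IH.
case: eqP => [E|_]; last by rewrite -IH.
rewrite -IH /= E lmat_linv.
change (weval A B t = lmat A B l * ((lmat A B l)^-1 * weval A B t)).
by rewrite mulrA mulrV ?lmat_unit // mul1r.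
Qed.

End WordSec.

Lemma det_weval (A B : MM) w : \det A = 1 -> \det B = 1 -> \det (weval A B w) = 1.
Proof.
move=> dA dB; elim: w => [|[g e] w IH] /=; first exact: det1.
rewrite det_mulmx IH mulr1 /lmat; case: g; case: e => /=; rewrite ?det_inv ?dA ?dB ?invr1 //.
Qed.

Lemma aut_eval psi g (A B : MM) : eeq (ecomp psi g) eid ->
  A \is a GRing.unit -> B \is a GRing.unit ->
  weval (weval A B (img_a psi)) (weval A B (img_b psi)) (img_a g) = A /\
  weval (weval A B (img_a psi)) (weval A B (img_b psi)) (img_b g) = B.
Proof.
move=> [ea eb] uA uB; rewrite -!weval_wsubst //.
rewrite -(weval_reduce A B uA uB (wsubst _ (img_a g))) -(weval_reduce A B uA uB (wsubst _ (img_b g))).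
rewrite /ecomp /= in ea eb; rewrite ea eb /=.
by split; apply: mulmx1.
Qed.

Lemma expsum_cons g l w : expsum g (l :: w) =
  (if l.1 == g then (if l.2 then -1 else 1) else 0) + expsum g w.
Proof. by rewrite /expsum big_cons; case: ifP => //; rewrite add0r. Qed.

Lemma st_e ha hb w : (4 %| (st ha hb w).2%:Z - (ha.2%:Z * expsum false w + hb.2%:Z * expsum true w))%Z.
Proof.
elim: w => [|[g e] w IH]; first by rewrite /= /expsum !big_nil !mulr0 subr0.
move/dvdzP: IH => [q Hq]; apply/dvdzP.
rewrite /= !expsum_cons /himg /=.
case: g; case: e => /=; rewrite ?PoszD ?PoszM.
- exists (q + hb.2%:Z); lia.
- exists q; lia.
- exists (q + ha.2%:Z); lia.
- exists q; lia.
Qed.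

Lemma abel_parity psi : H1_Z2_dim psi = 3%N ->
  [/\ (2 %| expsum false (img_a psi) - 1)%Z, (2 %| expsum true (img_a psi))%Z,
      (2 %| expsum false (img_b psi))%Z & (2 %| expsum true (img_b psi) - 1)%Z].
Proof.
rewrite /H1_Z2_dim => h.
have r0 : \rank (map_mx (fun z : int => (z%:~R : 'F_2)) (abel psi - 1%:M)) = 0%N by lia.
move/eqP: r0; rewrite mxrank_eq0 => /eqP /matrixP h0.
have c2 : 2 \in [pchar 'F_2] by apply: pchar_Fp.
have e i j : (2 %| abel psi i j - (i == j)%:R)%Z.
  by rewrite (dvdz_pcharf c2); move: (h0 i j); rewrite !mxE => ->.
move: (e 0 0) (e 1 0) (e 0 1) (e 1 1); rewrite !mxE /=.
by rewrite !subr0 => -> -> -> ->.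
Qed.

Lemma abel_det psi : hyperbolic_bundle psi ->
  expsum false (img_a psi) * expsum true (img_b psi) -
  expsum false (img_b psi) * expsum true (img_a psi) = 1.
Proof. by move=> [d _]; move: d; rewrite det2 !mxE. Qed.

Definition Iv (n1 k : int) (x : H) : bool :=
  if odd x.2 then (n1 %| x.1 - k)%Z else (n1 %| x.1)%Z.

Lemma Iv_mul n1 k x y : Iv n1 k x -> Iv n1 k y -> Iv n1 k (hmul x y).
Proof.
case: x => x1 e1; case: y => y1 e2; rewrite /Iv /hmul /= oddD.
case: (odd e1); case: (odd e2) => /= /dvdzP [q1 h1] /dvdzP [q2 h2]; apply/dvdzP.
- exists (q1 - q2); lia.
- exists (q1 - q2); lia.
- exists (q1 + q2); lia.
- exists (q1 + q2); lia.
Qed.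

Lemma Iv_inv n1 k x : Iv n1 k x -> Iv n1 k (hinv x).
Proof.
case: x => x1 e1; rewrite /Iv /hinv /= oddM /=.
case: (odd e1) => //= /dvdzP [q h]; apply/dvdzP; exists (- q); lia.
Qed.

Lemma Iv_st n1 k u v w : Iv n1 k u -> Iv n1 k v -> Iv n1 k (st u v w).
Proof.
move=> hu hv; elim: w => [|[g e] w IH] /=; first by rewrite /Iv /= dvdz0.
apply: Iv_mul => //; rewrite /himg /=.
by case: g; case: e => //=; apply: Iv_inv.
Qed.

Definition mk2 (a b c d : CC) : MM :=
  \matrix_(i < 2, j < 2) if i == 0 then (if j == 0 then a else b) else (if j == 0 then c else d).

Lemma mk2E a b c d : let M := mk2 a b c d in
  [/\ M 0 0 = a, M 0 1 = b, M 1 0 = c & M 1 1 = d].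
Proof. by rewrite /mk2 !mxE. Qed.

Lemma mk2_mul a b c d a' b' c' d' : mk2 a b c d * mk2 a' b' c' d' =
  mk2 (a * a' + b * c') (a * b' + b * d') (c * a' + d * c') (c * b' + d * d').
Proof.
apply/matrixP => i j; rewrite mul2E /mk2 !mxE /=.
by case: (ord2P i) => ->; case: (ord2P j) => ->.
Qed.

Lemma mk2_1 : mk2 1 0 0 1 = 1.
Proof.
apply/matrixP => i j; rewrite /mk2 !mxE /=.
by case: (ord2P i) => ->; case: (ord2P j) => ->.
Qed.

Lemma two_neq0 : (2 : CC) != 0.
Proof. by rewrite pnatr_eq0. Qed.

Definition P0 : MM := mk2 2 0 0 2^-1.
Definition Q0 : MM := mk2 0 1 (-1) 0.

Lemma dP0 : \det P0 = 1.
Proof. by rewrite det2 /P0 !mxE /= mulr0 subr0 mulfV // two_neq0. Qed.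
Lemma dQ0 : \det Q0 = 1.
Proof. by rewrite det2 /Q0 !mxE /= mulr0 sub0r mulrN1 opprK. Qed.
Lemma tQ0 : \tr Q0 = 0.
Proof. by rewrite tr2 /Q0 !mxE /= addr0. Qed.
Lemma tP0Q0 : \tr (P0 * Q0) = 0.
Proof. by rewrite tr2 /P0 /Q0 mk2_mul !mxE /= !(mulr0, mul0r, addr0, add0r). Qed.

Lemma inv_of_mul (X Y : MM) : X * Y = 1 -> X^-1 = Y.
Proof.
move=> h; have [uX _] := mulmx1_unit h.
by rewrite -[X^-1]mulr1 -h mulKr.
Qed.

Lemma P0_expz (n : int) : P0 ^ n = mk2 (2 ^ n) 0 0 (2 ^ n)^-1.
Proof.
have hn k : P0 ^+ k = mk2 (2 ^+ k) 0 0 (2 ^+ k)^-1.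
  elim: k => [|k IH]; first by rewrite !expr0 invr1 mk2_1.
  rewrite exprS IH /P0 mk2_mul !(mulr0, mul0r, addr0, add0r) exprS invfM //.
case: n => k; first exact: hn.
change ((P0 ^+ k.+1)^-1 = mk2 (2 ^+ k.+1)^-1 0 0 ((2 ^+ k.+1)^-1)^-1).
apply: inv_of_mul; rewrite hn mk2_mul invrK !(mulr0, mul0r, addr0, add0r).
rewrite mulfV ?mulVf ?mk2_1 // expf_eq0 negb_and two_neq0 orbT //.
Qed.

Lemma rel0 : Q0 * Q0 = -1 /\ Q0 * P0 = P0^-1 * Q0.
Proof. exact: rel dP0 dQ0 tQ0 tP0Q0. Qed.

Lemma Mx0_00 x : (Mx P0 Q0 x) 0 0 =
  if odd x.2 then 0 else (if odd (x.2./2) then - 2 ^ x.1 else 2 ^ x.1).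
Proof.
have [QQ _] := rel0.
rewrite /Mx -{1}(odd_double_half x.2) -mul2n exprD Q2m // P0_expz.
case: (odd x.2); case: (odd (x.2./2)); rewrite ?expr1 ?expr0 ?mulr1 ?mul1r ?mulrN1 ?mulrN;
  rewrite /Q0 ?mk2_mul ?mxE /= ?(mulr0, mul0r, addr0, add0r, oppr0) //.
Qed.

Lemma pow2_pos (n : int) : 0 < (2 : CC) ^ n.
Proof. by apply: exprz_gt0; rewrite ltr0n. Qed.

Lemma pow2_inj (m n : int) : (2 : CC) ^ m = 2 ^ n -> m = n.
Proof.
move=> h; have : (2 : CC) ^ (m - n) == 1.
  by rewrite expfzDr ?two_neq0 // h -expfzDr ?two_neq0 // subrr expr0z.
rewrite pexprz_eq1 ?ler0n // (_ : (2 : CC) == 1 = false) ?orbF ?subr_eq0 => [/eqP //|].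
by rewrite pnatr_eq1.
Qed.

Lemma Mx0_inj x y : Mx P0 Q0 x = Mx P0 Q0 y -> ~~ odd y.2 -> ~~ odd x.2 /\ x.1 = y.1.
Proof.
move=> h hy; have := f_equal (fun M : MM => M 0 0) h; rewrite /= !Mx0_00 (negbTE hy).
have p1 := pow2_pos x.1; have p2 := pow2_pos y.1.
case: (odd x.2) => /=.
  case: (odd _) => /eqP; rewrite eq_sym ?oppr_eq0 => /eqP h0; by rewrite h0 ltxx in p2.
case: (odd (x.2./2)); case: (odd (y.2./2)) => h0; split => //.
- by apply: pow2_inj; apply: oppr_inj.
- have : 0 < 2 ^ x.1 + 2 ^ y.1 :> CC by apply: addr_gt0.
  by rewrite -h0 subrr ltxx.
- have : 0 < 2 ^ x.1 + 2 ^ y.1 :> CC by apply: addr_gt0.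
  by rewrite h0 addrC subrr ltxx.
- exact: pow2_inj.
Qed.

Lemma half_odd (n : nat) (z : int) : (4 %| n%:Z - z)%Z -> (2 %| z)%Z -> odd (n./2) = ~~ (4 %| z)%Z.
Proof.
move=> h1 h2; have := odd_double_half n; have := odd_double_half (n./2).
case E1: (odd n); case E2: (odd n./2); case E: (4 %| z)%Z; rewrite /= ?add0n ?add1n.
all: lia.
Qed.

Lemma even_of (n : nat) (z : int) : (4 %| n%:Z - z)%Z -> (2 %| z)%Z -> ~~ odd n.
Proof.
move=> h1 h2; have := odd_double_half n.
case E1: (odd n) => //=; lia.
Qed.

Lemma odd_of (n : nat) (z : int) : (4 %| n%:Z - z)%Z -> (2 %| z - 1)%Z -> odd n.
Proof.
move=> h1 h2; have := odd_double_half n.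
case E1: (odd n) => //=; rewrite add0n; lia.
Qed.

Lemma sign_arith (a b c d : int) : (2 %| a - 1)%Z -> (2 %| b)%Z -> (2 %| c)%Z -> (2 %| d - 1)%Z ->
  a * d - c * b = 1 ->
  (4 %| b)%Z (+) (4 %| c)%Z (+) (4 %| a + c + 3 * b + 3 * d)%Z.
Proof.
move=> /dvdzP [x ha] /dvdzP [y hb] /dvdzP [z hc] /dvdzP [w hd] h.
have ea : a = x * 2 + 1 by rewrite -ha subrK.
have ed : d = w * 2 + 1 by rewrite -hd subrK.
have e : 2 * x + 2 * w + 4 * (x * w) - 4 * (z * y) = 0.
  transitivity ((x*2+1)*(w*2+1) - z*2*(y*2) - 1); first ring.
  by rewrite -ea -ed -hb -hc h subrr.
set p := x * w in e; set q := z * y in e.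
rewrite ea ed hb hc.
case E1 : (4 %| y * 2)%Z; case E2 : (4 %| z * 2)%Z;
  case E3 : (4 %| x * 2 + 1 + z * 2 + 3 * (y * 2) + 3 * (w * 2 + 1))%Z => //=.
all: lia.
Qed.

Lemma dvd1_pm (n : int) : (n %| 1)%Z -> n = 1 \/ n = -1.
Proof. rewrite dvdz1 => /eqP h; lia. Qed.

Lemma uP0 : P0 \is a GRing.unit.
Proof. exact: unit_det1 dP0. Qed.

Lemma key_n psi g ha hb n1 k : eeq (ecomp psi g) eid ->
  let u := st ha hb (img_a psi) in let v := st ha hb (img_b psi) in
  Iv n1 k u -> Iv n1 k v ->
  [/\ Mx P0 Q0 (st u v (img_a g)) = Mx P0 Q0 ha, Mx P0 Q0 (st u v (img_b g)) = Mx P0 Q0 hb,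
      Iv n1 k (st u v (img_a g)) & Iv n1 k (st u v (img_b g))].
Proof.
move=> hg u v hu hv; have [QQ QP] := rel0.
have uA := unit_det1 _ (det_Mx _ _ dP0 dQ0 ha).
have uB := unit_det1 _ (det_Mx _ _ dP0 dQ0 hb).
have [ea eb] := aut_eval _ _ _ _ hg uA uB.
rewrite !(weval_st _ _ uP0 QQ QP) -/u -/v in ea eb.
by split; [exact: ea | exact: eb | exact: Iv_st | exact: Iv_st].
Qed.

Definition sc (e : CC) (p : pt) : pt := (e * p.1.1, e * p.1.2, e * p.2).

Lemma generic_axis psi (L : pt -> Prop) (s : bool) (A0 B0 : MM) :
  (forall e p, L p -> L (sc e p)) ->
  \det A0 = 1 -> \det B0 = 1 -> L (charpt A0 B0) ->
  sc (-1) (charpt A0 B0) <> charpt A0 B0 ->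
  (forall A B : MM, \det A = 1 -> \det B = 1 -> L (charpt A B) ->
     charpt (weval A B (img_a psi)) (weval A B (img_b psi)) = sc (if s then -1 else 1) (charpt A B)) ->
  (subset_pt L (Xfix psi) <-> ~~ s) /\ subset_pt L (Xfix (ecomp psi psi)).
Proof.
move=> Lsc dA0 dB0 L0 n0 AX.
have sc1 p : sc 1 p = p by case: p => [[x y] z]; rewrite /sc /= !mul1r.
have scc p : sc (if s then -1 else 1) (sc (if s then -1 else 1) p) = p.
  by case: p => [[x y] z]; case: (s); rewrite /sc /= !mulrA ?mulrN1 ?opprK !mul1r.
split; first split.
- move=> h; apply/negP => hs; apply: n0.
  have := h _ L0 A0 B0 dA0 dB0 erefl; rewrite AX // hs => ->.
  by [].
- move/negbTE => hs p Lp A B dA dB hp.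
  by rewrite AX ?hp // hs sc1.
- move=> p Lp A B dA dB hp.
  have uA := unit_det1 A dA; have uB := unit_det1 B dB.
  rewrite /= !weval_wsubst //.
  have dA' := det_weval A B (img_a psi) dA dB.
  have dB' := det_weval A B (img_b psi) dA dB.
  have L' : L (charpt (weval A B (img_a psi)) (weval A B (img_b psi))).
    by rewrite AX ?hp //; apply: Lsc.
  by rewrite (AX _ _ dA' dB' L') (AX _ _ dA dB) ?hp // scc.
Qed.

Section Axes.
Variables (psi g : endo).
Hypothesis hg : eeq (ecomp psi g) eid.
Hypotheses (q1 : (2 %| expsum false (img_a psi) - 1)%Z) (q2 : (2 %| expsum true (img_a psi))%Z)
  (q3 : (2 %| expsum false (img_b psi))%Z) (q4 : (2 %| expsum true (img_b psi) - 1)%Z).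

Definition ha1 : H := (1, 0%N).
Definition hb1 : H := (0, 1%N).
Definition u1 := st ha1 hb1 (img_a psi).
Definition v1 := st ha1 hb1 (img_b psi).

Lemma u1e : (4 %| (u1.2)%:Z - expsum true (img_a psi))%Z.
Proof. by have := st_e ha1 hb1 (img_a psi); rewrite /= mul0r add0r mul1r. Qed.
Lemma v1e : (4 %| (v1.2)%:Z - expsum true (img_b psi))%Z.
Proof. by have := st_e ha1 hb1 (img_b psi); rewrite /= mul0r add0r mul1r. Qed.

Lemma u1_even : ~~ odd u1.2.
Proof. exact: even_of u1e q2. Qed.
Lemma v1_odd : odd v1.2.
Proof. exact: odd_of v1e q4. Qed.

Lemma u1_n : u1.1 = 1 \/ u1.1 = -1.
Proof.
have hu : Iv u1.1 v1.1 u1 by rewrite /Iv (negbTE u1_even) dvdzz.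
have hv : Iv u1.1 v1.1 v1 by rewrite /Iv v1_odd subrr dvdz0.
have [e1 _ i1 _] := key_n psi g ha1 hb1 _ _ hg hu hv.
have [ev ex] := Mx0_inj _ _ e1 isT.
by move: i1; rewrite /Iv (negbTE ev) ex => /dvd1_pm.
Qed.

Lemma AX1 (A B : MM) : \det A = 1 -> \det B = 1 -> L1 (charpt A B) ->
  charpt (weval A B (img_a psi)) (weval A B (img_b psi)) =
  sc (if odd (u1.2./2) then -1 else 1) (charpt A B).
Proof.
move=> dA dB [/= tB tAB].
have [QQ QP] := rel A B dA dB tB tAB.
have uA := unit_det1 A dA.
have W := weval_st A B uA QQ QP ha1 hb1.
have MA : Mx A B ha1 = A by rewrite /Mx /= expr1z expr0 mulr1.
have MB : Mx A B hb1 = B by rewrite /Mx /= expr0z mul1r expr1.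
rewrite MA MB in W.
rewrite /charpt !W -/u1 -/v1 /sc /= tB tAB !mulr0.
rewrite (_ : mulmx _ _ = Mx A B (hmul u1 v1)); last by apply: MxM.
rewrite !(tr_Mx A B dA dB QQ QP) /hmul /= oddD (negbTE u1_even) v1_odd /=.
rewrite (tr_pm1 A _ dA u1_n).
by case: (odd _); rewrite ?mulN1r ?mul1r.
Qed.

Definition ha2 : H := (0, 1%N).
Definition hb2 : H := (1, 0%N).
Definition u2 := st ha2 hb2 (img_a psi).
Definition v2 := st ha2 hb2 (img_b psi).

Lemma u2e : (4 %| (u2.2)%:Z - expsum false (img_a psi))%Z.
Proof. by have := st_e ha2 hb2 (img_a psi); rewrite /= mul0r addr0 mul1r. Qed.
Lemma v2e : (4 %| (v2.2)%:Z - expsum false (img_b psi))%Z.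
Proof. by have := st_e ha2 hb2 (img_b psi); rewrite /= mul0r addr0 mul1r. Qed.

Lemma u2_odd : odd u2.2.
Proof. exact: odd_of u2e q1. Qed.
Lemma v2_even : ~~ odd v2.2.
Proof. exact: even_of v2e q3. Qed.

Lemma v2_n : v2.1 = 1 \/ v2.1 = -1.
Proof.
have hu : Iv v2.1 u2.1 u2 by rewrite /Iv u2_odd subrr dvdz0.
have hv : Iv v2.1 u2.1 v2 by rewrite /Iv (negbTE v2_even) dvdzz.
have [_ e1 _ i1] := key_n psi g ha2 hb2 _ _ hg hu hv.
have [ev ex] := Mx0_inj _ _ e1 isT.
by move: i1; rewrite /Iv (negbTE ev) ex => /dvd1_pm.
Qed.

Lemma AX2 (A B : MM) : \det A = 1 -> \det B = 1 -> L2 (charpt A B) ->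
  charpt (weval A B (img_a psi)) (weval A B (img_b psi)) =
  sc (if odd (v2.2./2) then -1 else 1) (charpt A B).
Proof.
move=> dA dB [/= tA tAB].
have tBA : \tr (B * A) = 0 by rewrite -mulmxE mxtrace_mulC.
have [QQ QP] := rel B A dB dA tA tBA.
have uB := unit_det1 B dB.
have W := weval_st B A uB QQ QP ha2 hb2.
have MA : Mx B A ha2 = A by rewrite /Mx /= expr0z mul1r expr1.
have MB : Mx B A hb2 = B by rewrite /Mx /= expr1z expr0 mulr1.
rewrite MA MB in W.
rewrite /charpt !W -/u2 -/v2 /sc /= tA tAB !mulr0.
rewrite (_ : mulmx _ _ = Mx B A (hmul u2 v2)); last by apply: MxM.
rewrite !(tr_Mx B A dB dA QQ QP) /hmul /= oddD (negbTE v2_even) u2_odd /=.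
rewrite (tr_pm1 B _ dB v2_n).
by case: (odd _); rewrite ?mulN1r ?mul1r.
Qed.

Definition ha3 : H := (0, 1%N).
Definition hb3 : H := (-1, 3%N).
Definition u3 := st ha3 hb3 (img_a psi).
Definition v3 := st ha3 hb3 (img_b psi).
Definition z3 := expsum false (img_a psi) + expsum false (img_b psi) +
   3 * expsum true (img_a psi) + 3 * expsum true (img_b psi).

Lemma u3e : (4 %| (u3.2)%:Z - (expsum false (img_a psi) + 3 * expsum true (img_a psi)))%Z.
Proof. by have := st_e ha3 hb3 (img_a psi); rewrite /= mul1r. Qed.
Lemma v3e : (4 %| (v3.2)%:Z - (expsum false (img_b psi) + 3 * expsum true (img_b psi)))%Z.
Proof. by have := st_e ha3 hb3 (img_b psi); rewrite /= mul1r. Qed.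

Lemma u3_odd : odd u3.2.
Proof. apply: (odd_of _ _ u3e); move: q1 q2; lia. Qed.
Lemma v3_odd : odd v3.2.
Proof. apply: (odd_of _ _ v3e); move: q3 q4; lia. Qed.
Lemma w3e : (4 %| (u3.2 + v3.2)%:Z - z3)%Z.
Proof. move: u3e v3e; rewrite /z3 PoszD; lia. Qed.
Lemma z3_even : (2 %| z3)%Z.
Proof. move: q1 q2 q3 q4; rewrite /z3; lia. Qed.

Lemma w3_n : u3.1 - v3.1 = 1 \/ u3.1 - v3.1 = -1.
Proof.
have hu : Iv (u3.1 - v3.1) u3.1 u3 by rewrite /Iv u3_odd subrr dvdz0.
have hv : Iv (u3.1 - v3.1) u3.1 v3 by rewrite /Iv v3_odd -opprB rpredN dvdzz.
have [e1 e2 i1 i2] := key_n psi g ha3 hb3 _ _ hg hu hv.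
have [QQ QP] := rel0.
have e3 : Mx P0 Q0 (hmul (st u3 v3 (img_a g)) (st u3 v3 (img_b g))) = Mx P0 Q0 (1, 4%N).
  by rewrite -(MxM _ _ uP0 QP) e1 e2 (MxM _ _ uP0 QP).
have [ev ex] := Mx0_inj _ _ e3 isT.
by move: (Iv_mul _ _ _ _ i1 i2); rewrite /Iv (negbTE ev) ex => /dvd1_pm.
Qed.

Lemma AX3 (A B : MM) : \det A = 1 -> \det B = 1 -> L3 (charpt A B) ->
  charpt (weval A B (img_a psi)) (weval A B (img_b psi)) =
  sc (if odd ((u3.2 + v3.2)./2) then -1 else 1) (charpt A B).
Proof.
move=> dA dB [/= tA tB].
have AA := sq_neg1 A dA tA.
have BB := sq_neg1 B dB tB.
have dP : \det (A * B) = 1 by rewrite det_mul dA dB mulr1.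
have tPQ : \tr (A * B * A) = 0.
  rewrite -mulmxE mxtrace_mulC !mulmxE mulrA AA mulN1r.
  by rewrite linearN /= tB oppr0.
have [QQ QP] := rel (A * B) A dP dA tA tPQ.
have uA := unit_det1 A dA; have uB := unit_det1 B dB.
have uP := unit_det1 _ dP.
have W := weval_st (A * B) A uP QQ QP ha3 hb3.
have MA : Mx (A * B) A ha3 = A by rewrite /Mx /= expr0z mul1r expr1.
have MB : Mx (A * B) A hb3 = B.
  rewrite /Mx /= exprN1 invrM // (inv_of_mul _ _ (_ : A * - A = 1)); last by rewrite mulrN AA opprK.
  rewrite (inv_of_mul _ _ (_ : B * - B = 1)); last by rewrite mulrN BB opprK.
  by rewrite exprS expr2 mulrA AA mulN1r !mulrN mulNr opprK -mulrA AA mulrN1 opprK.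
rewrite MA MB in W.
rewrite /charpt !W -/u3 -/v3 /sc /= tA tB !mulr0.
rewrite (_ : mulmx _ _ = Mx (A * B) A (hmul u3 v3)); last by apply: MxM.
rewrite !(tr_Mx (A * B) A dP dA QQ QP) /hmul /= oddD u3_odd v3_odd /=.
rewrite (tr_pm1 (A * B) _ dP w3_n).
by case: (odd _); rewrite ?mulN1r ?mul1r.
Qed.

End Axes.

Lemma neg_fix (x : CC) : -1 * x = x -> x = 0.
Proof.
move=> h; have : x *+ 2 = 0 by rewrite mulr2n -{1}h mulN1r addNr.
by move/eqP; rewrite mulrn_eq0 /= => /eqP.
Qed.

Lemma tr1_neq0 : \tr (1 : MM) != 0.
Proof. by rewrite (_ : \tr (1 : MM) = 2%:R) ?pnatr_eq0 // mxtrace1. Qed.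

Lemma dQ0V : \det (Q0^-1) = 1.
Proof. by change (\det (invmx Q0) = 1); rewrite det_inv dQ0 invr1. Qed.

Lemma tQ0V : \tr (Q0^-1) = 0.
Proof. by rewrite tr_inv ?dQ0 ?tQ0. Qed.

Theorem lemma3p3 (psi : endo) :
  is_aut psi -> hyperbolic_bundle psi -> H1_Z2_dim psi = 3%N ->
  ( (subset_pt L1 (Xfix psi) /\ ~ subset_pt L2 (Xfix psi) /\ ~ subset_pt L3 (Xfix psi))
  \/ (~ subset_pt L1 (Xfix psi) /\ subset_pt L2 (Xfix psi) /\ ~ subset_pt L3 (Xfix psi))
  \/ (~ subset_pt L1 (Xfix psi) /\ ~ subset_pt L2 (Xfix psi) /\ subset_pt L3 (Xfix psi))
  \/ (subset_pt L1 (Xfix psi) /\ subset_pt L2 (Xfix psi) /\ subset_pt L3 (Xfix psi)) )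
  /\ (subset_pt L1 (Xfix (ecomp psi psi)) /\ subset_pt L2 (Xfix (ecomp psi psi))
      /\ subset_pt L3 (Xfix (ecomp psi psi))).
Proof.
move=> [g [hg _]] hyp hdim.
have [q1 q2 q3 q4] := abel_parity psi hdim.
have hdet := abel_det psi hyp.
have [S1 T1] : (subset_pt L1 (Xfix psi) <-> ~~ odd ((u1 psi).2./2)) /\ subset_pt L1 (Xfix (ecomp psi psi)).
  apply: (generic_axis psi L1 _ 1 Q0) (AX1 psi g hg q2 q4).
  - by move=> e p [h1 h2]; rewrite /L1 /sc /= h1 h2 !mulr0.
  - exact: det1.
  - exact: dQ0.
  - by rewrite /L1 /charpt /= mul1mx tQ0.
  - by case => /neg_fix /eqP; rewrite (negbTE tr1_neq0).
have [S2 T2] : (subset_pt L2 (Xfix psi) <-> ~~ odd ((v2 psi).2./2)) /\ subset_pt L2 (Xfix (ecomp psi psi)).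
  apply: (generic_axis psi L2 _ Q0 1) (AX2 psi g hg q1 q3).
  - by move=> e p [h1 h2]; rewrite /L2 /sc /= h1 h2 !mulr0.
  - exact: dQ0.
  - exact: det1.
  - by rewrite /L2 /charpt /= mulmx1 tQ0.
  - by case => _ /neg_fix /eqP; rewrite (negbTE tr1_neq0).
have [S3 T3] : (subset_pt L3 (Xfix psi) <-> ~~ odd (((u3 psi).2 + (v3 psi).2)./2)) /\
    subset_pt L3 (Xfix (ecomp psi psi)).
  apply: (generic_axis psi L3 _ Q0 Q0^-1) (AX3 psi g hg q1 q2 q3 q4).
  - by move=> e p [h1 h2]; rewrite /L3 /sc /= h1 h2 !mulr0.
  - exact: dQ0.
  - exact: dQ0V.
  - by rewrite /L3 /charpt /= tQ0 tQ0V.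
    rewrite /charpt (_ : Q0 *m Q0^-1 = 1); last by rewrite mulmxE mulrV //; exact: unit_det1 _ dQ0.
    by case => _ _ /neg_fix /eqP; rewrite (negbTE tr1_neq0).
split; last by [].
rewrite (half_odd _ _ (u1e psi) q2) negbK in S1.
rewrite (half_odd _ _ (v2e psi) q3) negbK in S2.
rewrite (half_odd _ _ (w3e psi q1 q2 q3 q4) (z3_even psi q1 q2 q3 q4)) negbK in S3.
have := sign_arith _ _ _ _ q1 q2 q3 q4 hdet.
rewrite /z3 in S3.
move: S1 S2 S3.
case: (4 %| _)%Z; case: (4 %| _)%Z; case: (4 %| _)%Z => //= S1 S2 S3 _.
- by right; right; right; split; [apply/S1|split; [apply/S2|apply/S3]].
- by left; split; [apply/S1|split; [move/S2|move/S3]].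
- by right; left; split; [move/S1|split; [apply/S2|move/S3]].
- by right; right; left; split; [move/S1|split; [move/S2|apply/S3]].
Qed.
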